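(* Let $n\ge2$ and let $\boldsymbol x^*$ be a pure Nash equilibrium of $\mathcal L(n,S)$. Then all $\boldsymbol x^*$-balanced players obtain the same payoff.
   Context: Network: $(V,E)$ is a finite connected graph with no vertex of degree $2$; each edge $e$ has a length $\lambda(e)>0$. $S$ is the metric measure space obtained by identifying each edge with a segment of length $\lambda(e)$, with length measure $\lambda$ and shortest-path distance $d$. Vertices have their graph degree, and interior points of edges have degree $2$. Location game $\mathcal L(n,S)$: $n$ players each choose a point of $S$. Consumers are distributed according to $\lambda$, and each shops at a closest occupied location. Consumers equidistant from several closest occupied locations are split equally among those locations, and the share of a location is split equally among the players located there. Payoff is the mass of consumers attracted. Nash equilibria are pure. For a profile $\boldsymbol x$ and $w\in S$: if $\operatorname{card}\{i:x_i=w\}=\operatorname{degree}(w)$, the players located at $w$ are called $\boldsymbol x$-balanced and $w$ is called $\boldsymbol x$-saturated. *)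

(* Defs.v *)
From Stdlib Require Import Reals Lra Lia List Arith Relations ClassicalEpsilon.
Import ListNotations.
Open Scope R_scope.

(* Vertices are 0 .. nv-1, edges are 0 .. ne-1; edge e joins src e and dst e
   and has length len e. *)
Record network := Network {
  nv  : nat;
  ne  : nat;
  src : nat -> nat;
  dst : nat -> nat;
  len : nat -> R
}.

Definition vdegree (N : network) (v : nat) : nat :=
  length (filter (fun e => orb (Nat.eqb (src N e) v) (Nat.eqb (dst N e) v)) (seq 0 (ne N))).

Definition adj (N : network) (a b : nat) : Prop :=
  exists e, (e < ne N)%nat /\
    ((src N e = a /\ dst N e = b) \/ (src N e = b /\ dst N e = a)).

Definition wf_network (N : network) : Prop :=
  (0 < nv N)%nat /\
  (forall e, (e < ne N)%nat ->
      (src N e < nv N)%nat /\ (dst N e < nv N)%nat /\ src N e <> dst N e /\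
      0 < len N e) /\
  (forall e f, (e < ne N)%nat -> (f < ne N)%nat -> e <> f ->
      ~ ((src N e = src N f /\ dst N e = dst N f) \/
         (src N e = dst N f /\ dst N e = src N f))) /\
  (forall a b, (a < nv N)%nat -> (b < nv N)%nat -> clos_refl_trans nat (adj N) a b) /\
  (forall v, (v < nv N)%nat -> vdegree N v <> 2%nat).

Inductive walk_len (N : network) : nat -> nat -> R -> Prop :=
| WL_nil : forall a, walk_len N a a 0
| WL_cons : forall a c b e l,
    (e < ne N)%nat ->
    ((src N e = a /\ dst N e = c) \/ (src N e = c /\ dst N e = a)) ->
    walk_len N c b l -> walk_len N a b (len N e + l).

(* infimum of a set of reals (chosen classically; 0 if it does not exist) *)
Definition Rinf (P : R -> Prop) : R :=
  epsilon (inhabits 0)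
    (fun d => (forall l, P l -> d <= l) /\
              (forall d', (forall l, P l -> d' <= l) -> d' <= d)).

Definition vdist (N : network) (a b : nat) : R := Rinf (walk_len N a b).

(* Points of S: a vertex, or an interior point of edge e at distance t
   from src e (0 < t < len e). *)
Inductive point := PV (v : nat) | PE (e : nat) (t : R).

Definition valid_point (N : network) (p : point) : Prop :=
  match p with
  | PV v => (v < nv N)%nat
  | PE e t => (e < ne N)%nat /\ 0 < t < len N e
  end.

Definition point_eq_dec (p q : point) : {p = q} + {p <> q}.
Proof. decide equality; first [apply Req_EM_T | apply Nat.eq_dec]. Defined.

Definition exits (N : network) (p : point) : list (nat * R) :=
  match p with
  | PV v => [(v, 0)]
  | PE e t => [(src N e, t); (dst N e, len N e - t)]
  end.

Fixpoint Rmin_list (d : R) (l : list R) : R :=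
  match l with [] => d | x :: l' => Rmin x (Rmin_list d l') end.

(* shortest-path distance in S: leave p through an end of its edge, travel
   along a shortest path in the graph, enter q; or, if p and q are interior
   points of the same edge, travel directly along that edge. *)
Definition dist (N : network) (p q : point) : R :=
  let via := flat_map (fun a => map (fun b => snd a + vdist N (fst a) (fst b) + snd b)
                                    (exits N q)) (exits N p) in
  let direct := match p, q with
                | PE e t, PE f s => if Nat.eq_dec e f then [Rabs (t - s)] else []
                | _, _ => []
                end in
  match direct ++ via with
  | [] => 0
  | x :: l => Rmin_list x l
  end.

Definition profile := nat -> point.

Definition nb_at (n : nat) (x : profile) (w : point) : nat :=
  length (filter (fun j => if point_eq_dec (x j) w then true else false) (seq 0 n)).

Definition degree (N : network) (w : point) : nat :=
  match w with PV v => vdegree N v | PE _ _ => 2%nat end.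

(* distance from consumer y to the nearest occupied location (n >= 1) *)
Definition dmin (N : network) (n : nat) (x : profile) (y : point) : R :=
  Rmin_list (dist N y (x 0%nat)) (map (fun j => dist N y (x j)) (seq 0 n)).

Definition is_closest (N : network) (n : nat) (x : profile) (y : point) (j : nat) : bool :=
  if Req_EM_T (dist N y (x j)) (dmin N n x y) then true else false.

(* number of distinct closest occupied locations: closest players j that are
   the first (smallest index) player at their location *)
Definition nb_closest_locs (N : network) (n : nat) (x : profile) (y : point) : nat :=
  length (filter (fun j => andb (is_closest N n x y j)
                   (forallb (fun k => if point_eq_dec (x k) (x j) then false else true)
                           (seq 0 j)))
                 (seq 0 n)).

Definition share (N : network) (n : nat) (x : profile) (i : nat) (y : point) : R :=
  if is_closest N n x y i
  then / INR (nb_closest_locs N n x y) * / INR (nb_at n x (x i))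
  else 0.

Definition edge_pt (N : network) (e : nat) (t : R) : point :=
  if Rle_dec t 0 then PV (src N e)
  else if Rle_dec (len N e) t then PV (dst N e)
  else PE e t.

Definition Rint (f : R -> R) (a b : R) : R :=
  epsilon (inhabits 0)
    (fun r => exists pr : Riemann_integrable f a b, RiemannInt pr = r).

Definition payoff (N : network) (n : nat) (x : profile) (i : nat) : R :=
  fold_right Rplus 0
    (map (fun e => Rint (fun t => share N n x i (edge_pt N e t)) 0 (len N e))
         (seq 0 (ne N))).

Definition valid_profile (N : network) (n : nat) (x : profile) : Prop :=
  forall i, (i < n)%nat -> valid_point N (x i).

Definition deviate (x : profile) (i : nat) (p : point) : profile :=
  fun j => if Nat.eq_dec j i then p else x j.

Definition is_nash (N : network) (n : nat) (x : profile) : Prop :=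
  valid_profile N n x /\
  forall i p, (i < n)%nat -> valid_point N p ->
    payoff N n (deviate x i p) i <= payoff N n x i.

Definition balanced (N : network) (n : nat) (x : profile) (i : nat) : Prop :=
  nb_at n x (x i) = degree N (x i).

(* Main.v *)
Require Import Defs.
From Stdlib Require Import Reals.
Open Scope R_scope.

From Stdlib Require Import Reals Lra Lia List Arith Relations ClassicalEpsilon.
From Coquelicot Require Import Coquelicot.
Require Import Defs.
Import ListNotations.
Open Scope R_scope.


Lemma Rmin_list_le : forall x l z, In z (x :: l) -> Rmin_list x l <= z.
Proof.
  intros x l; induction l as [|y l IH]; intros z Hz; simpl in *.
  - destruct Hz as [<-|[]]; lra.
  - destruct Hz as [<-|[<-|Hz]].
    + assert (H := IH x (or_introl eq_refl)). apply Rle_trans with (Rmin_list x l); auto. apply Rmin_r.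
    + apply Rmin_l.
    + apply Rle_trans with (Rmin_list x l). apply Rmin_r. apply IH; simpl; auto.
Qed.

Lemma Rmin_list_in : forall x l, In (Rmin_list x l) (x :: l).
Proof.
  intros x l; induction l as [|y l IH]; simpl in *; auto.
  unfold Rmin; destruct (Rle_dec y (Rmin_list x l)); auto.
  destruct IH as [H|H]; auto.
Qed.

Lemma Rmin_list_eq : forall x l m, In m (x :: l) -> (forall z, In z (x :: l) -> m <= z) ->
  Rmin_list x l = m.
Proof.
  intros. apply Rle_antisym. apply Rmin_list_le; auto. apply H0. apply Rmin_list_in.
Qed.

Lemma Rinf_spec : forall P : R -> Prop, (exists l, P l) -> (forall l, P l -> 0 <= l) ->
  (forall l, P l -> Rinf P <= l) /\ (forall d', (forall l, P l -> d' <= l) -> d' <= Rinf P).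
Proof.
  intros P [l0 Hl0] Hpos.
  set (E := fun z => P (- z)).
  assert (Hb : bound E). { exists 0. intros z Hz. unfold E in Hz. apply Hpos in Hz. lra. }
  assert (He : exists z, E z). { exists (- l0). unfold E. rewrite Ropp_involutive. auto. }
  destruct (completeness E Hb He) as [m [Hub Hlub]].
  unfold Rinf. apply epsilon_spec.
  exists (- m). split.
  - intros l Hl. assert (E (- l)) by (unfold E; rewrite Ropp_involutive; auto).
    apply Hub in H. lra.
  - intros d' Hd'. assert (m <= - d').
    { apply Hlub. intros z Hz. unfold E in Hz. apply Hd' in Hz. lra. }
    lra.
Qed.

Lemma walk_nonneg : forall N, wf_network N -> forall a b l, walk_len N a b l -> 0 <= l.
Proof.
  intros N HN a b l H; induction H. lra.
  destruct HN as [_ [HE _]]. destruct (HE e H) as [_ [_ [_ Hl]]]. lra.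
Qed.

Lemma walk_app : forall N a b c l1 l2, walk_len N a b l1 -> walk_len N b c l2 -> walk_len N a c (l1 + l2).
Proof.
  intros N a b c l1 l2 H1; revert c l2; induction H1; intros c' l2 H2.
  - replace (0 + l2) with l2 by ring. auto.
  - replace (len N e + l + l2) with (len N e + (l + l2)) by ring.
    econstructor; eauto.
Qed.

Lemma walk_exists : forall N a b, clos_refl_trans nat (adj N) a b -> exists l, walk_len N a b l.
Proof.
  intros N a b H; induction H.
  - destruct H as [e [He Hxy]]. exists (len N e + 0). apply WL_cons with y; [auto| destruct Hxy; tauto | constructor].
  - exists 0. constructor.
  - destruct IHclos_refl_trans1 as [l1 H1], IHclos_refl_trans2 as [l2 H2].
    exists (l1 + l2). eapply walk_app; eauto.
Qed.

Lemma walk_connected : forall N, wf_network N -> forall a b, (a < nv N)%nat -> (b < nv N)%nat ->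
  exists l, walk_len N a b l.
Proof.
  intros N HN a b Ha Hb. apply walk_exists. destruct HN as [_ [_ [_ [HC _]]]]. auto.
Qed.

Lemma vdist_spec : forall N, wf_network N -> forall a b, (a < nv N)%nat -> (b < nv N)%nat ->
  (forall l, walk_len N a b l -> vdist N a b <= l) /\
  (forall d', (forall l, walk_len N a b l -> d' <= l) -> d' <= vdist N a b).
Proof.
  intros. unfold vdist. apply Rinf_spec. apply walk_connected; auto.
  intros; eapply walk_nonneg; eauto.
Qed.

Lemma vdist_refl : forall N, wf_network N -> forall a, (a < nv N)%nat -> vdist N a a = 0.
Proof.
  intros N HN a Ha. destruct (vdist_spec N HN a a Ha Ha) as [H1 H2].
  apply Rle_antisym. apply H1. constructor.
  apply H2. intros; eapply walk_nonneg; eauto.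
Qed.

Lemma walk_last : forall N a b l, walk_len N a b l ->
  (a = b /\ l = 0) \/
  exists f c l', (f < ne N)%nat /\ ((src N f = c /\ dst N f = b) \/ (src N f = b /\ dst N f = c)) /\
     walk_len N a c l' /\ l = l' + len N f.
Proof.
  intros N a b l H; induction H.
  - left; auto.
  - right. destruct IHwalk_len as [[<- ->]|[f [c' [l' [Hf [Hfc [Hw ->]]]]]]].
    + exists e, a, 0. split; auto. split. destruct H0; [left|right]; tauto.
      split. constructor. ring.
    + exists f, c', (len N e + l'). split; auto. split; auto. split.
      econstructor; eauto. ring.
Qed.

Definition incident N v e : bool := orb (Nat.eqb (src N e) v) (Nat.eqb (dst N e) v).
Definition other N e v : nat := if Nat.eqb (src N e) v then dst N e else src N e.

Lemma bellman : forall N, wf_network N -> forall a v, (a < nv N)%nat -> (v < nv N)%nat -> a <> v ->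
  exists f, (f < ne N)%nat /\ incident N v f = true /\
     vdist N a (other N f v) + len N f <= vdist N a v.
Proof.
  intros N HN a v Ha Hv Hav.
  assert (Hwf := HN). destruct Hwf as [_ [HE _]].
  set (g := fun f => vdist N a (other N f v) + len N f).
  destruct (walk_connected N HN a v Ha Hv) as [l0 Hw0].
  destruct (walk_last N a v l0 Hw0) as [[? _]|[f0 [c0 [l0' [Hf0 [Hfc0 _]]]]]]; [congruence|].
  assert (Hinc0 : incident N v f0 = true).
  { unfold incident. destruct Hfc0 as [[_ ->]|[-> _]]; rewrite Nat.eqb_refl; auto with bool. }
  set (L := filter (incident N v) (seq 0 (ne N))).
  set (M := Rmin_list (g f0) (map g L)).
  assert (HM : exists f, (f < ne N)%nat /\ incident N v f = true /\ M = g f).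
  { destruct (Rmin_list_in (g f0) (map g L)) as [H|H]. exists f0; auto.
    apply in_map_iff in H. destruct H as [f [Hf HfL]]. unfold L in HfL.
    apply filter_In in HfL. destruct HfL as [HfL Hi]. apply in_seq in HfL.
    exists f. split. lia. auto. }
  destruct HM as [f [Hf [Hi HMf]]]. exists f. split; auto. split; auto.
  fold (g f). rewrite <- HMf.
  destruct (vdist_spec N HN a v Ha Hv) as [_ H2]. apply H2.
  intros l Hw. destruct (walk_last N a v l Hw) as [[? _]|[f1 [c1 [l1 [Hf1 [Hfc1 [Hw1 ->]]]]]]]; [congruence|].
  assert (Hinc1 : incident N v f1 = true).
  { unfold incident. destruct Hfc1 as [[_ ->]|[-> _]]; rewrite Nat.eqb_refl; auto with bool. }
  assert (Hoth : other N f1 v = c1).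
  { unfold other. destruct (HE f1 Hf1) as [_ [_ [Hsd _]]].
    destruct Hfc1 as [[<- <-]|[<- <-]].
    - destruct (Nat.eqb_spec (src N f1) (dst N f1)); congruence.
    - rewrite Nat.eqb_refl; auto. }
  apply Rle_trans with (g f1).
  - apply Rmin_list_le. right. apply in_map. unfold L. apply filter_In. split; auto. apply in_seq; lia.
  - unfold g. rewrite Hoth. apply Rplus_le_compat_r.
    assert (Hc1 : (c1 < nv N)%nat).
    { destruct (HE f1 Hf1) as [Hs [Hd _]]. destruct Hfc1 as [[<- _]|[_ <-]]; auto. }
    destruct (vdist_spec N HN a c1 Ha Hc1) as [H3 _]. apply H3; auto.
Qed.


Definition via_l N p q := flat_map (fun a => map (fun b => snd a + vdist N (fst a) (fst b) + snd b)
                                    (exits N q)) (exits N p).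
Definition direct_l (p q : point) := match p, q with
                | PE e t, PE f s => if Nat.eq_dec e f then [Rabs (t - s)] else []
                | _, _ => []
                end.

Lemma dist_eq : forall N p q, dist N p q =
  match direct_l p q ++ via_l N p q with [] => 0 | x :: l => Rmin_list x l end.
Proof. reflexivity. Qed.

Lemma dist_le : forall N p q z, In z (direct_l p q ++ via_l N p q) -> dist N p q <= z.
Proof.
  intros N p q z H. rewrite dist_eq. destruct (direct_l p q ++ via_l N p q) as [|x l].
  destruct H. apply Rmin_list_le; auto.
Qed.

Lemma dist_in : forall N p q, In (dist N p q) (direct_l p q ++ via_l N p q).
Proof.
  intros N p q. rewrite dist_eq. destruct (direct_l p q ++ via_l N p q) as [|x l] eqn:E.
  - exfalso. apply app_eq_nil in E. destruct E as [_ E]. revert E.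
    destruct p; destruct q; simpl; discriminate.
  - apply Rmin_list_in.
Qed.

Lemma dist_le_via : forall N p q a b, In a (exits N p) -> In b (exits N q) ->
  dist N p q <= snd a + vdist N (fst a) (fst b) + snd b.
Proof.
  intros. apply dist_le. apply in_or_app. right. unfold via_l. apply in_flat_map.
  exists a. split; auto. apply in_map_iff. exists b; auto.
Qed.

Lemma dist_le_direct : forall N e t s, dist N (PE e t) (PE e s) <= Rabs (t - s).
Proof.
  intros. apply dist_le. apply in_or_app. left. simpl. destruct (Nat.eq_dec e e); [|congruence].
  left; auto.
Qed.

Lemma dist_cases : forall N p q,
  (exists e t s, p = PE e t /\ q = PE e s /\ dist N p q = Rabs (t - s)) \/
  (exists a b, In a (exits N p) /\ In b (exits N q) /\ dist N p q = snd a + vdist N (fst a) (fst b) + snd b).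
Proof.
  intros. destruct (in_app_or _ _ _ (dist_in N p q)) as [H|H].
  - left. destruct p as [v|e t]; destruct q as [w|f s]; simpl in H; try tauto.
    destruct (Nat.eq_dec e f) as [<-|]; simpl in H; [|tauto].
    destruct H as [H|[]]. exists e, t, s. auto.
  - right. unfold via_l in H. apply in_flat_map in H. destruct H as [a [Ha H]].
    apply in_map_iff in H. destruct H as [b [Hb Hbin]]. exists a, b. auto.
Qed.

Lemma Rmin_list_lb : forall x l m, m <= x -> (forall z, In z l -> m <= z) -> m <= Rmin_list x l.
Proof.
  intros. destruct (Rmin_list_in x l) as [H1|H1]. rewrite <- H1; auto. auto.
Qed.


Definition atom := (bool * R)%type.
Definition ev (a : atom) (t : R) : R := if fst a then t + snd a else - t + snd a.
Definition Good (A : list atom) t1 t2 v1 v2 := exists a, In a A /\ v1 = ev a t1 /\ v2 = ev a t2.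
Definition Cons (A : list atom) t1 t2 :=
  forall a b, In a A -> In b A -> (ev a t1 <= ev b t1 <-> ev a t2 <= ev b t2).

Lemma Good_min : forall A t1 t2 u1 u2 w1 w2, Cons A t1 t2 -> Good A t1 t2 u1 u2 -> Good A t1 t2 w1 w2 ->
  Good A t1 t2 (Rmin u1 w1) (Rmin u2 w2).
Proof.
  intros A t1 t2 u1 u2 w1 w2 HC [a [Ha [-> ->]]] [b [Hb [-> ->]]].
  specialize (HC a b Ha Hb).
  unfold Rmin; destruct (Rle_dec (ev a t1) (ev b t1)) as [H1|H1];
    destruct (Rle_dec (ev a t2) (ev b t2)) as [H2|H2].
  - exists a; auto.
  - exfalso; tauto.
  - exfalso; tauto.
  - exists b; auto.
Qed.

Lemma Good_Rmin_list : forall A t1 t2 l1 l2 x1 x2, Cons A t1 t2 -> Forall2 (Good A t1 t2) l1 l2 ->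
  Good A t1 t2 x1 x2 -> Good A t1 t2 (Rmin_list x1 l1) (Rmin_list x2 l2).
Proof.
  intros A t1 t2 l1 l2 x1 x2 HC HF Hx. induction HF; simpl; auto.
  apply Good_min; auto.
Qed.

Lemma Good_eq : forall A t1 t2 u1 u2 w1 w2, Cons A t1 t2 -> Good A t1 t2 u1 u2 -> Good A t1 t2 w1 w2 ->
  (u1 = w1 <-> u2 = w2).
Proof.
  intros A t1 t2 u1 u2 w1 w2 HC [a [Ha [-> ->]]] [b [Hb [-> ->]]].
  assert (H1 := HC a b Ha Hb). assert (H2 := HC b a Hb Ha).
  split; intro H; apply Rle_antisym; try (apply H1 || apply H2); rewrite H; lra.
Qed.

Definition atoms_q N e q : list atom :=
  flat_map (fun b => [(true, vdist N (src N e) (fst b) + snd b);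
                      (false, len N e + vdist N (dst N e) (fst b) + snd b)]) (exits N q) ++
  match q with PE f s => if Nat.eq_dec e f then [(true, - s); (false, s)] else [] | _ => [] end.

Lemma good_src : forall A t1 t2 c, In (true, c) A -> Good A t1 t2 (t1 + c) (t2 + c).
Proof. intros. exists (true, c). split; auto. Qed.

Lemma good_dst : forall A t1 t2 L c, In (false, L + c) A ->
  Good A t1 t2 (L - t1 + c) (L - t2 + c).
Proof. intros. exists (false, L + c). split; auto. unfold ev; simpl; split; ring. Qed.

Lemma good_abs : forall A t1 t2 s, Cons A t1 t2 -> In (true, - s) A -> In (false, s) A ->
  Good A t1 t2 (Rabs (t1 - s)) (Rabs (t2 - s)).
Proof.
  intros A t1 t2 s HC H1 H2. assert (HH := HC _ _ H1 H2). unfold ev in HH; simpl in HH.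
  destruct (Rle_dec (t1 + - s) (- t1 + s)) as [Hl|Hl].
  - exists (false, s). split; auto. unfold ev; simpl.
    assert (t2 + - s <= - t2 + s) by tauto.
    rewrite !Rabs_left1 by lra. split; ring.
  - exists (true, - s). split; auto. unfold ev; simpl.
    assert (~ (t2 + - s <= - t2 + s)) by tauto.
    rewrite !Rabs_right by lra. split; ring.
Qed.

Lemma Good_match : forall A t1 t2 L1 L2, Cons A t1 t2 -> Forall2 (Good A t1 t2) L1 L2 -> L1 <> [] ->
  Good A t1 t2 (match L1 with [] => 0 | x :: l => Rmin_list x l end)
               (match L2 with [] => 0 | x :: l => Rmin_list x l end).
Proof.
  intros A t1 t2 L1 L2 HC HF Hne. destruct HF as [|x1 x2 l1 l2 Hx HF]. congruence.
  apply Good_Rmin_list; auto.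
Qed.

Ltac pick := (left; reflexivity) + (right; pick).
Ltac good_tac HI := eexists; split; [apply HI; simpl; pick | unfold ev; simpl; split; ring].

Lemma dist_good : forall N A e q t1 t2, Cons A t1 t2 -> incl (atoms_q N e q) A ->
  Good A t1 t2 (dist N (PE e t1) q) (dist N (PE e t2) q).
Proof.
  intros N A e q t1 t2 HC HI. rewrite !dist_eq. apply Good_match; auto.
  2:{ destruct q; unfold direct_l, via_l; simpl; try destruct Nat.eq_dec; discriminate. }
  destruct q as [b|f s]; unfold atoms_q, direct_l, via_l in *; simpl in *.
  - repeat constructor; good_tac HI.
  - destruct (Nat.eq_dec e f) as [<-|Hne]; simpl in *.
    + constructor. apply good_abs; auto; apply HI; simpl; auto 10.
      repeat constructor; good_tac HI.
    + repeat constructor; good_tac HI.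
Qed.

Definition atoms_all N n (z : profile) e :=
  atoms_q N e (z 0%nat) ++ flat_map (fun k => atoms_q N e (z k)) (seq 0 n).

Lemma Forall2_map_same : forall {X Y Z} (P : Y -> Z -> Prop) (f : X -> Y) g l,
  (forall k, In k l -> P (f k) (g k)) -> Forall2 P (map f l) (map g l).
Proof.
  intros X Y Z P f g l H; induction l; simpl; constructor; auto. apply H; simpl; auto.
  apply IHl; intros; apply H; simpl; auto.
Qed.

Lemma is_closest_const : forall N n z e t1 t2 k, Cons (atoms_all N n z e) t1 t2 -> In k (seq 0 n) ->
  is_closest N n z (PE e t1) k = is_closest N n z (PE e t2) k.
Proof.
  intros N n z e t1 t2 k HC Hk.
  set (A := atoms_all N n z e) in *.
  assert (Hd : forall k, In k (seq 0 n) -> Good A t1 t2 (dist N (PE e t1) (z k)) (dist N (PE e t2) (z k))).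
  { intros k' Hk'. apply dist_good; auto. intros a Ha. unfold A, atoms_all. apply in_or_app. right.
    apply in_flat_map. exists k'; auto. }
  assert (Hm : Good A t1 t2 (dmin N n z (PE e t1)) (dmin N n z (PE e t2))).
  { unfold dmin. apply Good_Rmin_list; auto.
    - apply Forall2_map_same. auto.
    - apply dist_good; auto. intros a Ha. unfold A, atoms_all. apply in_or_app. left; auto. }
  assert (He := Good_eq A t1 t2 _ _ _ _ HC (Hd k Hk) Hm).
  unfold is_closest.
  destruct (Req_EM_T (dist N (PE e t1) (z k)) (dmin N n z (PE e t1)));
  destruct (Req_EM_T (dist N (PE e t2) (z k)) (dmin N n z (PE e t2))); tauto.
Qed.

Lemma share_const : forall N n z e t1 t2 i, Cons (atoms_all N n z e) t1 t2 -> (i < n)%nat ->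
  share N n z i (PE e t1) = share N n z i (PE e t2).
Proof.
  intros N n z e t1 t2 i HC Hi. unfold share.
  rewrite (is_closest_const N n z e t1 t2 i HC) by (apply in_seq; lia).
  unfold nb_closest_locs.
  rewrite (filter_ext_in _ (fun j => andb (is_closest N n z (PE e t2) j)
                   (forallb (fun k => if point_eq_dec (z k) (z j) then false else true)
                           (seq 0 j)))).
  reflexivity.
  intros j Hj. rewrite (is_closest_const N n z e t1 t2 j HC Hj). reflexivity.
Qed.

Definition crit (a b : atom) : R :=
  match a, b with
  | (true, c1), (false, c2) => (c2 - c1) / 2
  | (false, c1), (true, c2) => (c1 - c2) / 2
  | _, _ => 0
  end.

Definition crits (A : list atom) : list R := flat_map (fun a => map (crit a) A) A.

Lemma Cons_of_nocrit : forall A u v t1 t2, u < t1 < v -> u < t2 < v ->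
  (forall k, In k (crits A) -> ~ (u < k < v)) -> Cons A t1 t2.
Proof.
  intros A u v t1 t2 H1 H2 HK a b Ha Hb.
  assert (Hk : ~ (u < crit a b < v)).
  { apply HK. unfold crits. apply in_flat_map. exists a. split; auto. apply in_map; auto. }
  destruct a as [[|] c1]; destruct b as [[|] c2]; unfold ev, crit in *; simpl in *;
    split; intro; lra.
Qed.


Definition PC (K : list R) (f : R -> R) a b :=
  forall u v, a <= u -> u < v -> v <= b -> (forall k, In k K -> ~ (u < k < v)) ->
    exists c, forall t, u < t < v -> f t = c.

Lemma PC_ex_RInt : forall K f a b, a <= b -> PC K f a b -> ex_RInt f a b.
Proof.
  induction K as [|k K IH]; intros f a b Hab HP.
  - destruct (Req_dec a b) as [<-|Hne]. apply ex_RInt_point.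
    destruct (HP a b) as [c Hc]; try lra. intros k [].
    apply ex_RInt_ext with (fun _ => c). intros x Hx.
    rewrite Rmin_left in Hx by lra. rewrite Rmax_right in Hx by lra. symmetry; auto.
    apply ex_RInt_const.
  - destruct (Rlt_dec a k) as [Hak|Hak]; [destruct (Rlt_dec k b) as [Hkb|Hkb]|].
    + apply ex_RInt_Chasles with k.
      * apply IH. lra. intros u v Hu Huv Hv HK. apply HP; try lra.
        intros k' [<-|Hk']. lra. auto.
      * apply IH. lra. intros u v Hu Huv Hv HK. apply HP; try lra.
        intros k' [<-|Hk']. lra. auto.
    + apply IH; auto. intros u v Hu Huv Hv HK. apply HP; try lra.
      intros k' [<-|Hk']. lra. auto.
    + apply IH; auto. intros u v Hu Huv Hv HK. apply HP; try lra.
      intros k' [<-|Hk']. lra. auto.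
Qed.

Lemma share_PC : forall N n z e i, (i < n)%nat -> 0 <= len N e ->
  PC (crits (atoms_all N n z e)) (fun t => share N n z i (edge_pt N e t)) 0 (len N e).
Proof.
  intros N n z e i Hi HL u v Hu Huv Hv HK.
  exists (share N n z i (PE e ((u + v) / 2))). intros t Ht.
  unfold edge_pt. destruct (Rle_dec t 0); [lra|]. destruct (Rle_dec (len N e) t); [lra|].
  apply share_const; auto.
  apply Cons_of_nocrit with u v; auto. lra.
Qed.

Lemma share_ex_RInt : forall N n z e i, (i < n)%nat -> 0 <= len N e ->
  ex_RInt (fun t => share N n z i (edge_pt N e t)) 0 (len N e).
Proof.
  intros. eapply PC_ex_RInt; eauto. apply share_PC; auto.
Qed.

Lemma Rint_RInt : forall f a b, ex_RInt f a b -> Rint f a b = RInt f a b.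
Proof.
  intros f a b H. assert (Hr := ex_RInt_Reals_0 f a b H).
  unfold Rint. assert (Hs : exists r, exists pr : Riemann_integrable f a b, RiemannInt pr = r).
  { exists (RiemannInt Hr). exists Hr; auto. }
  destruct (epsilon_spec (inhabits 0) _ Hs) as [pr Hpr]. rewrite <- Hpr.
  symmetry. apply RInt_Reals.
Qed.


Lemma RInt_zero_ext : forall (f : R -> R) a b, a <= b -> (forall t, a < t < b -> f t = 0) -> RInt f a b = 0.
Proof.
  intros f a b Hab H. rewrite (RInt_ext f (fun _ => 0)).
  rewrite RInt_const. unfold scal; simpl. unfold mult; simpl. ring.
  intros x Hx. rewrite Rmin_left in Hx by lra. rewrite Rmax_right in Hx by lra. auto.
Qed.

Lemma support_bound : forall (f : R -> R) a b c1 c2, a <= b -> c1 <= c2 -> ex_RInt f a b ->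
  (forall t, a < t < b -> f t <= 1) ->
  (forall t, a < t < b -> (t < c1 \/ c2 < t) -> f t = 0) ->
  RInt f a b <= c2 - c1.
Proof.
  intros f a b c1 c2 Hab Hc Hex H1 H0.
  set (u := Rmax a (Rmin b c1)). set (v := Rmax a (Rmin b c2)).
  assert (Hu : a <= u <= b) by (unfold u, Rmax, Rmin; repeat destruct Rle_dec; lra).
  assert (Hv : u <= v <= b) by (unfold u, v, Rmax, Rmin; repeat destruct Rle_dec; lra).
  assert (Hvu : v - u <= c2 - c1) by (unfold u, v, Rmax, Rmin; repeat destruct Rle_dec; lra).
  assert (E1 : ex_RInt f a u) by (apply (@ex_RInt_Chasles_1 R_CompleteNormedModule f a u b); auto; lra).
  assert (E2 : ex_RInt f u b) by (apply (@ex_RInt_Chasles_2 R_CompleteNormedModule f a u b); auto; lra).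
  assert (E3 : ex_RInt f u v) by (apply (@ex_RInt_Chasles_1 R_CompleteNormedModule f u v b); auto; lra).
  assert (E4 : ex_RInt f v b) by (apply (@ex_RInt_Chasles_2 R_CompleteNormedModule f u v b); auto; lra).
  rewrite <- (RInt_Chasles f a u b E1 E2). rewrite <- (RInt_Chasles f u v b E3 E4).
  unfold plus; simpl.
  rewrite (RInt_zero_ext f a u) by (first [lra | intros t Ht; apply H0; [lra|];
     left; unfold u, Rmax, Rmin in Ht; repeat destruct Rle_dec in Ht; lra]).
  assert (Z2 : RInt f v b = 0).
  { apply RInt_zero_ext. lra. intros t Ht. apply H0. lra. right.
    unfold v, Rmax, Rmin in Ht. destruct (Rle_dec b c2); destruct (Rle_dec a _); lra. }
  rewrite Z2.
  assert (RInt f u v <= RInt (fun _ => 1) u v).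
  { apply RInt_le; try lra; auto. apply ex_RInt_const. intros; apply H1; lra. }
  rewrite RInt_const in H. unfold scal in H; simpl in H; unfold mult in H; simpl in H. lra.
Qed.

Definition ind (c1 c2 t : R) : R :=
  if Rle_dec c1 t then if Rle_dec t c2 then 1 else 0 else 0.

Lemma ind_bounds : forall c1 c2 t, 0 <= ind c1 c2 t <= 1.
Proof. intros; unfold ind; repeat destruct Rle_dec; lra. Qed.

Lemma ind_ex_RInt : forall c1 c2 a b, a <= b -> ex_RInt (ind c1 c2) a b.
Proof.
  intros. apply PC_ex_RInt with [c1; c2]; auto.
  intros u v Hu Huv Hv HK. exists (ind c1 c2 ((u + v) / 2)). intros t Ht.
  assert (K1 := HK c1 (or_introl eq_refl)). assert (K2 := HK c2 (or_intror (or_introl eq_refl))).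
  unfold ind; repeat destruct Rle_dec; try reflexivity; exfalso; lra.
Qed.

Lemma ind_RInt : forall c1 c2 a b, a <= b -> c1 <= c2 -> RInt (ind c1 c2) a b <= c2 - c1.
Proof.
  intros. apply support_bound; auto. apply ind_ex_RInt; auto.
  intros; apply ind_bounds.
  intros t _ Ht. unfold ind; repeat destruct Rle_dec; lra.
Qed.


Definition dirs N (w : point) (eps : R) : list point :=
  match w with
  | PV v => map (fun f => if Nat.eqb (src N f) v then PE f eps else PE f (len N f - eps))
                (filter (incident N v) (seq 0 (ne N)))
  | PE f s => [PE f (s - eps); PE f (s + eps)]
  end.

Lemma dirs_length : forall N w eps, length (dirs N w eps) = degree N w.
Proof.
  intros. destruct w; simpl; auto. rewrite length_map. reflexivity.
Qed.

Lemma dir_vertex : forall N v f eps, (f < ne N)%nat -> incident N v f = true ->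
  (forall e, (e < ne N)%nat -> src N e <> dst N e) ->
  exists P, In P (dirs N (PV v) eps) /\ In (other N f v, len N f - eps) (exits N P).
Proof.
  intros N v f eps Hf Hi Hsd. unfold dirs.
  exists (if Nat.eqb (src N f) v then PE f eps else PE f (len N f - eps)). split.
  - apply (in_map (fun g => if Nat.eqb (src N g) v then PE g eps else PE g (len N g - eps))).
    apply filter_In. split; auto. apply in_seq; lia.
  - unfold other. destruct (Nat.eqb (src N f) v); simpl; auto.
Qed.

Lemma dir_exists : forall N, wf_network N -> forall w e t eps,
  valid_point N w -> (e < ne N)%nat -> 0 < eps -> eps < t -> t < len N e - eps ->
  (forall f s, w = PE f s -> e = f -> t < s - eps \/ s + eps < t) ->
  exists P, In P (dirs N w eps) /\ dist N (PE e t) P <= dist N (PE e t) w - eps.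
Proof.
  intros N HN w e t eps Hw He Heps Ht1 Ht2 Hnear.
  assert (HN' := HN). destruct HN' as [_ [HE _]].
  assert (Hsd : forall e, (e < ne N)%nat -> src N e <> dst N e) by (intros; apply HE; auto).
  destruct (HE e He) as [Hse [Hde [Hsde Hle]]].
  destruct w as [v|f s].
  - simpl in Hw.
    destruct (dist_cases N (PE e t) (PV v)) as [[e' [t' [s' [_ [H _]]]]]|[a [b [Ha [Hb Hr]]]]];
      [discriminate|].
    simpl in Hb. destruct Hb as [<-|[]]. simpl in Hr. rewrite Hr.
    assert (Hgen : forall a0 o, (a0 < nv N)%nat -> In (a0, o) (exits N (PE e t)) ->
              a0 <> v -> exists P, In P (dirs N (PV v) eps) /\
              dist N (PE e t) P <= o + vdist N a0 v + 0 - eps).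
    { intros a0 o Ha0 Hin Hne.
      destruct (bellman N HN a0 v Ha0 Hw Hne) as [f [Hf [Hi Hb]]].
      destruct (dir_vertex N v f eps Hf Hi Hsd) as [P [HP HPe]].
      exists P. split; auto.
      eapply Rle_trans. apply (dist_le_via N (PE e t) P (a0, o) _ Hin HPe). simpl. lra. }
    simpl in Ha. destruct Ha as [<-|[<-|[]]]; simpl.
    + destruct (Nat.eq_dec (src N e) v) as [Hv|Hv].
      * exists (PE e eps). split.
        -- unfold dirs. apply in_map_iff. exists e. rewrite Hv, Nat.eqb_refl. split; auto.
           apply filter_In. split. apply in_seq; lia. unfold incident. rewrite Hv, Nat.eqb_refl; auto.
        -- eapply Rle_trans. apply dist_le_direct. rewrite Hv, vdist_refl by auto.
           rewrite Rabs_right by lra. lra.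
      * apply (Hgen (src N e) t); simpl; auto.
    + destruct (Nat.eq_dec (dst N e) v) as [Hv|Hv].
      * exists (PE e (len N e - eps)). split.
        -- unfold dirs. apply in_map_iff. exists e.
           destruct (Nat.eqb_spec (src N e) v) as [Hs|Hs]. congruence. split; auto.
           apply filter_In. split. apply in_seq; lia. unfold incident. rewrite Hv, Nat.eqb_refl.
           apply Bool.orb_true_r.
        -- eapply Rle_trans. apply dist_le_direct. rewrite Hv, vdist_refl by auto.
           rewrite Rabs_left1 by lra. lra.
      * apply (Hgen (dst N e) (len N e - t)); simpl; auto.
  - destruct (dist_cases N (PE e t) (PE f s)) as [[e' [t' [s' [H1 [H2 Hr]]]]]|[a [b [Ha [Hb Hr]]]]].
    + injection H1 as Ee Et. subst e' t'. injection H2 as Ef Es. subst f s'. rewrite Hr.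
      destruct (Hnear e s eq_refl eq_refl) as [Hn|Hn].
      * exists (PE e (s - eps)). split. simpl; auto.
        eapply Rle_trans. apply dist_le_direct. rewrite !Rabs_left1 by lra. lra.
      * exists (PE e (s + eps)). split. simpl; auto.
        eapply Rle_trans. apply dist_le_direct. rewrite !Rabs_right by lra. lra.
    + rewrite Hr. simpl in Hb. destruct Hb as [<-|[<-|[]]]; simpl.
      * exists (PE f (s - eps)). split. simpl; auto.
        eapply Rle_trans. apply (dist_le_via N _ _ a (src N f, s - eps) Ha). simpl; auto.
        simpl. lra.
      * exists (PE f (s + eps)). split. simpl; auto.
        eapply Rle_trans. apply (dist_le_via N _ _ a (dst N f, len N f - (s + eps)) Ha). simpl; auto.
        simpl. lra.
Qed.


Lemma filter_all_false : forall {A} (p : A -> bool) l, (forall k, In k l -> p k = false) -> filter p l = [].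
Proof.
  intros A p l H; induction l; simpl; auto. rewrite H by (simpl; auto). apply IHl; intros; apply H; simpl; auto.
Qed.

Lemma count1 : forall (p : nat -> bool) n i, (i < n)%nat -> p i = true ->
  (forall k, (k < n)%nat -> k <> i -> p k = false) -> length (filter p (seq 0 n)) = 1%nat.
Proof.
  intros p n; induction n as [|n IH]; intros i Hi Hpi Hk. lia.
  rewrite seq_S, filter_app, length_app. simpl.
  destruct (Nat.eq_dec i n) as [->|Hne].
  - rewrite Hpi. simpl.
    rewrite filter_all_false; [simpl; lia|].
    intros k Hkin. apply in_seq in Hkin. apply Hk; lia.
  - rewrite (Hk n) by lia. rewrite (IH i); [simpl; lia|lia|auto|]. intros; apply Hk; lia.
Qed.

Lemma deviate_share_one : forall N n x i P y, (i < n)%nat ->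
  (forall k, (k < n)%nat -> k <> i -> x k <> P) ->
  (forall k, (k < n)%nat -> k <> i -> dist N y P < dist N y (x k)) ->
  share N n (deviate x i P) i y = 1.
Proof.
  intros N n x i P y Hi Hne Hlt.
  set (z := deviate x i P).
  assert (Hzi : z i = P) by (unfold z, deviate; destruct Nat.eq_dec; congruence).
  assert (Hzk : forall k, k <> i -> z k = x k) by (intros; unfold z, deviate; destruct Nat.eq_dec; congruence).
  assert (Hdm : dmin N n z y = dist N y P).
  { unfold dmin. apply Rmin_list_eq.
    - right. rewrite <- Hzi. apply (in_map (fun j => dist N y (z j))). apply in_seq; lia.
    - intros w Hw. assert (Hk : exists k, (k < n)%nat /\ w = dist N y (z k)).
      { destruct Hw as [<-|Hw]. exists 0%nat. split; auto. lia.
        apply in_map_iff in Hw. destruct Hw as [k [<- Hk]]. apply in_seq in Hk. exists k; split; auto; lia. }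
      destruct Hk as [k [Hk ->]]. destruct (Nat.eq_dec k i) as [->|Hki]. rewrite Hzi; lra.
      rewrite Hzk by auto. left. apply Hlt; auto. }
  assert (Hc : forall k, (k < n)%nat -> is_closest N n z y k = if Nat.eq_dec k i then true else false).
  { intros k Hk. unfold is_closest. rewrite Hdm. destruct (Nat.eq_dec k i) as [->|Hki].
    - rewrite Hzi. destruct Req_EM_T; congruence.
    - rewrite Hzk by auto. destruct Req_EM_T as [E|]; auto. specialize (Hlt k Hk Hki). lra. }
  unfold share. rewrite Hc by auto. destruct (Nat.eq_dec i i); [|congruence].
  assert (H1 : nb_closest_locs N n z y = 1%nat).
  { unfold nb_closest_locs. apply count1 with i; auto.
    - rewrite Hc by auto. destruct (Nat.eq_dec i i); [|congruence]. simpl.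
      apply forallb_forall. intros k Hk. apply in_seq in Hk. rewrite Hzk by lia. rewrite Hzi.
      destruct point_eq_dec as [E|]; auto. exfalso; apply (Hne k); auto; lia.
    - intros k Hk Hki. rewrite Hc by auto. destruct (Nat.eq_dec k i); [congruence|]. auto. }
  assert (H2 : nb_at n z (z i) = 1%nat).
  { unfold nb_at. apply count1 with i; auto.
    - destruct point_eq_dec; congruence.
    - intros k Hk Hki. rewrite Hzk by auto. rewrite Hzi. destruct point_eq_dec as [E|]; auto.
      exfalso; apply (Hne k); auto. }
  rewrite H1, H2. simpl. rewrite Rinv_1. ring.
Qed.


Definition sumR (l : list R) : R := fold_right Rplus 0 l.

Lemma sumR_nonneg : forall l, (forall a, In a l -> 0 <= a) -> 0 <= sumR l.
Proof. induction l; simpl; intros; [lra|]. assert (0 <= a) by auto. assert (0 <= sumR l) by auto. lra. Qed.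

Lemma sumR_ge : forall l a, (forall a, In a l -> 0 <= a) -> In a l -> a <= sumR l.
Proof.
  induction l as [|b l IH]; simpl; intros a H Ha; [tauto|].
  destruct Ha as [<-|Ha]. assert (0 <= sumR l) by (apply sumR_nonneg; auto). lra.
  assert (0 <= b) by auto. assert (a <= sumR l) by (apply IH; auto). lra.
Qed.

Lemma inv_INR_bounds : forall k, 0 <= / INR k <= 1.
Proof.
  intros [|k]. simpl. rewrite Rinv_0. lra.
  assert (1 <= INR (S k)) by (rewrite S_INR; pose proof (pos_INR k); lra).
  split. left. apply Rinv_0_lt_compat. lra.
  rewrite <- Rinv_1. apply Rinv_le_contravar; lra.
Qed.

Lemma share_nonneg : forall N n x i y, 0 <= share N n x i y.
Proof.
  intros. unfold share. destruct is_closest; [|lra].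
  pose proof (inv_INR_bounds (nb_closest_locs N n x y)). pose proof (inv_INR_bounds (nb_at n x (x i))).
  apply Rmult_le_pos; tauto.
Qed.

Lemma share_le : forall N n x i y, INR (nb_at n x (x i)) * share N n x i y <= 1.
Proof.
  intros. unfold share. destruct is_closest; [|lra].
  pose proof (inv_INR_bounds (nb_closest_locs N n x y)).
  destruct (nb_at n x (x i)) as [|m]. simpl. lra.
  assert (0 < INR (S m)) by (apply lt_0_INR; lia).
  set (D := INR (S m)) in *. set (K := / INR (nb_closest_locs N n x y)) in *.
  replace (D * (K * / D)) with K by (field; lra). tauto.
Qed.

Lemma nb_at_pos : forall n x j, (j < n)%nat -> (1 <= nb_at n x (x j))%nat.
Proof.
  intros. unfold nb_at.
  assert (In j (filter (fun k => if point_eq_dec (x k) (x j) then true else false) (seq 0 n))).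
  { apply filter_In. split. apply in_seq; lia. destruct point_eq_dec; congruence. }
  destruct (filter _ _). destruct H0. simpl; lia.
Qed.

Lemma ind_zero : forall c1 c2 t, ind c1 c2 t = 0 -> t < c1 \/ c2 < t.
Proof. unfold ind; intros; repeat destruct Rle_dec; lra. Qed.

Lemma ind_01 : forall c1 c2 t, ind c1 c2 t = 0 \/ ind c1 c2 t = 1.
Proof. unfold ind; intros; repeat destruct Rle_dec; auto. Qed.

Definition s0 (w : point) : R := match w with PE _ s => s | PV _ => 0 end.

Lemma pointwise : forall N n x i j eps e t, wf_network N -> valid_profile N n x ->
  (i < n)%nat -> (j < n)%nat -> balanced N n x j -> 0 < eps ->
  (forall P, In P (dirs N (x j) eps) -> forall k, (k < n)%nat -> k <> i -> x k <> P) ->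
  (e < ne N)%nat -> 0 < t < len N e ->
  INR (degree N (x j)) * share N n x j (edge_pt N e t) <=
  sumR (map (fun P => share N n (deviate x i P) i (edge_pt N e t)) (dirs N (x j) eps)) +
  INR (degree N (x j)) * (ind 0 eps t + ind (len N e - eps) (len N e) t +
                          ind (s0 (x j) - eps) (s0 (x j) + eps) t).
Proof.
  intros N n x i j eps e t HN Hx Hi Hj Hb Heps Hfree He Ht.
  assert (Hy : edge_pt N e t = PE e t).
  { unfold edge_pt. destruct Rle_dec; [lra|]. destruct Rle_dec; [lra|]. auto. }
  rewrite Hy.
  unfold balanced in Hb. rewrite <- Hb.
  assert (HD : 1 <= INR (nb_at n x (x j))).
  { apply (le_INR 1). apply nb_at_pos; auto. }
  assert (Hsh := share_le N n x j (PE e t)).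
  assert (Hsum : 0 <= sumR (map (fun P => share N n (deviate x i P) i (PE e t)) (dirs N (x j) eps))).
  { apply sumR_nonneg. intros a Ha. apply in_map_iff in Ha. destruct Ha as [P [<- _]]. apply share_nonneg. }
  destruct (ind_01 0 eps t) as [I1|I1]; [|pose proof (ind_bounds (len N e - eps) (len N e) t);
     pose proof (ind_bounds (s0 (x j) - eps) (s0 (x j) + eps) t); nra].
  destruct (ind_01 (len N e - eps) (len N e) t) as [I2|I2]; [|pose proof (ind_bounds 0 eps t);
     pose proof (ind_bounds (s0 (x j) - eps) (s0 (x j) + eps) t); nra].
  destruct (ind_01 (s0 (x j) - eps) (s0 (x j) + eps) t) as [I3|I3]; [|pose proof (ind_bounds 0 eps t);
     pose proof (ind_bounds (len N e - eps) (len N e) t); nra].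
  rewrite I1, I2, I3.
  apply ind_zero in I1. apply ind_zero in I2. apply ind_zero in I3.
  destruct (is_closest N n x (PE e t) j) eqn:Hc.
  2:{ assert (share N n x j (PE e t) = 0) as -> by (unfold share; rewrite Hc; auto). nra. }
  unfold is_closest in Hc. destruct Req_EM_T as [Hr|]; [|discriminate].
  destruct (dir_exists N HN (x j) e t eps (Hx j Hj) He Heps) as [P [HP HPd]]; try lra.
  { intros f s Hf <-. rewrite Hf in I3. simpl in I3. lra. }
  assert (Hone : share N n (deviate x i P) i (PE e t) = 1).
  { apply deviate_share_one; [auto| |].
    - intros k Hk Hki. apply (Hfree P HP k Hk Hki).
    - intros k Hk Hki. assert (dmin N n x (PE e t) <= dist N (PE e t) (x k)).
      { unfold dmin. apply Rmin_list_le. right. apply (in_map (fun j => dist N (PE e t) (x j))).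
        apply in_seq; lia. }
      lra. }
  assert (1 <= sumR (map (fun P => share N n (deviate x i P) i (PE e t)) (dirs N (x j) eps))).
  { rewrite <- Hone. apply sumR_ge.
    intros a Ha. apply in_map_iff in Ha. destruct Ha as [P' [<- _]]. apply share_nonneg.
    apply (in_map (fun P => share N n (deviate x i P) i (PE e t))). auto. }
  lra.
Qed.


Lemma RInt_plusR : forall (f g : R -> R) a b, ex_RInt f a b -> ex_RInt g a b ->
  RInt (fun t => f t + g t) a b = RInt f a b + RInt g a b.
Proof. intros. exact (RInt_plus f g a b H H0). Qed.

Lemma ex_RInt_plusR : forall (f g : R -> R) a b, ex_RInt f a b -> ex_RInt g a b ->
  ex_RInt (fun t => f t + g t) a b.
Proof. intros. exact (ex_RInt_plus f g a b H H0). Qed.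

Lemma RInt_scalR : forall (f : R -> R) a b c, ex_RInt f a b ->
  RInt (fun t => c * f t) a b = c * RInt f a b.
Proof. intros. exact (RInt_scal f a b c H). Qed.

Lemma ex_RInt_scalR : forall (f : R -> R) a b c, ex_RInt f a b -> ex_RInt (fun t => c * f t) a b.
Proof. intros. exact (ex_RInt_scal f a b c H). Qed.

Lemma RInt_zeroR : forall a b, RInt (fun _ => 0) a b = 0.
Proof. intros. rewrite RInt_const. unfold scal; simpl; unfold mult; simpl. ring. Qed.

Lemma ex_RInt_sumR : forall {X} (F : X -> R -> R) l a b, (forall P, In P l -> ex_RInt (F P) a b) ->
  ex_RInt (fun t => sumR (map (fun P => F P t) l)) a b.
Proof.
  intros X F l a b H; induction l as [|P l IH]; simpl.
  - apply (ex_RInt_const a b 0).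
  - apply ex_RInt_plusR. apply H; simpl; auto. apply IH; intros; apply H; simpl; auto.
Qed.

Lemma RInt_sumR : forall {X} (F : X -> R -> R) l a b, (forall P, In P l -> ex_RInt (F P) a b) ->
  RInt (fun t => sumR (map (fun P => F P t) l)) a b = sumR (map (fun P => RInt (F P) a b) l).
Proof.
  intros X F l a b H; induction l as [|P l IH]; simpl.
  - apply RInt_zeroR.
  - rewrite RInt_plusR. rewrite IH; auto. intros; apply H; simpl; auto.
    apply H; simpl; auto. apply ex_RInt_sumR; intros; apply H; simpl; auto.
Qed.

Lemma sumR_le : forall {X} (f g : X -> R) l, (forall a, In a l -> f a <= g a) ->
  sumR (map f l) <= sumR (map g l).
Proof.
  intros X f g l H; induction l; simpl. lra.
  assert (f a <= g a) by (apply H; simpl; auto). assert (sumR (map f l) <= sumR (map g l)) by (apply IHl; intros; apply H; simpl; auto). lra.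
Qed.

Lemma sumR_plus : forall {X} (f g : X -> R) l, sumR (map (fun a => f a + g a) l) = sumR (map f l) + sumR (map g l).
Proof. intros X f g l; induction l; simpl. ring. rewrite IHl. ring. Qed.

Lemma sumR_scal : forall {X} (f : X -> R) c l, sumR (map (fun a => c * f a) l) = c * sumR (map f l).
Proof. intros X f c l; induction l; simpl. ring. rewrite IHl. ring. Qed.

Lemma sumR_const : forall {X} c (l : list X), sumR (map (fun _ => c) l) = c * INR (length l).
Proof.
  intros X c l; induction l as [|a l IH]. simpl; ring.
  change (c + sumR (map (fun _ => c) l) = c * INR (S (length l))). rewrite IH, S_INR. ring.
Qed.

Lemma sumR_swap : forall {X Y} (F : X -> Y -> R) L1 L2,
  sumR (map (fun a => sumR (map (fun b => F a b) L2)) L1) =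
  sumR (map (fun b => sumR (map (fun a => F a b) L1)) L2).
Proof.
  intros X Y F L1 L2; induction L1 as [|a L1 IH]; simpl.
  - rewrite sumR_const. ring.
  - rewrite IH. rewrite <- sumR_plus. reflexivity.
Qed.

Lemma payoff_RInt : forall N n z k, wf_network N -> (k < n)%nat ->
  payoff N n z k = sumR (map (fun e => RInt (fun t => share N n z k (edge_pt N e t)) 0 (len N e)) (seq 0 (ne N))).
Proof.
  intros N n z k HN Hk. unfold payoff, sumR. f_equal. apply map_ext_in. intros e He.
  apply in_seq in He. apply Rint_RInt. apply share_ex_RInt; auto.
  destruct HN as [_ [HE _]]. destruct (HE e ltac:(lia)) as [_ [_ [_ H]]]. lra.
Qed.

Lemma main_bound : forall N n x i j eps, wf_network N -> is_nash N n x ->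
  (i < n)%nat -> (j < n)%nat -> balanced N n x j -> 0 < eps ->
  (forall P, In P (dirs N (x j) eps) -> valid_point N P) ->
  (forall P, In P (dirs N (x j) eps) -> forall k, (k < n)%nat -> k <> i -> x k <> P) ->
  payoff N n x j <= payoff N n x i + 4 * eps * INR (ne N).
Proof.
  intros N n x i j eps HN [Hx Hnash] Hi Hj Hb Heps Hval Hfree.
  set (D := INR (degree N (x j))).
  assert (HD : 1 <= D).
  { unfold D. rewrite <- Hb. apply (le_INR 1). apply nb_at_pos; auto. }
  set (L := dirs N (x j) eps).
  set (F := fun P e => RInt (fun t => share N n (deviate x i P) i (edge_pt N e t)) 0 (len N e)).
  assert (Hlen : forall e, In e (seq 0 (ne N)) -> 0 < len N e).
  { intros e He. apply in_seq in He. destruct HN as [_ [HE _]]. destruct (HE e ltac:(lia)) as [_ [_ [_ H]]]. auto. }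
  assert (Hedge : forall e, In e (seq 0 (ne N)) ->
    D * RInt (fun t => share N n x j (edge_pt N e t)) 0 (len N e) <=
    sumR (map (fun P => F P e) L) + D * (4 * eps)).
  { intros e He. assert (HL := Hlen e He). apply in_seq in He.
    set (s := s0 (x j)).
    set (h := fun t => ind 0 eps t + ind (len N e - eps) (len N e) t + ind (s - eps) (s + eps) t).
    set (g := fun t => sumR (map (fun P => share N n (deviate x i P) i (edge_pt N e t)) L)).
    assert (Eg : ex_RInt g 0 (len N e)).
    { apply ex_RInt_sumR. intros; apply share_ex_RInt; auto; lra. }
    assert (Eh : ex_RInt h 0 (len N e)).
    { unfold h. apply ex_RInt_plusR; [apply ex_RInt_plusR|]; apply ind_ex_RInt; lra. }
    assert (Ef : ex_RInt (fun t => share N n x j (edge_pt N e t)) 0 (len N e)).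
    { apply share_ex_RInt; auto; lra. }
    rewrite <- RInt_scalR by auto.
    apply Rle_trans with (RInt (fun t => g t + D * h t) 0 (len N e)).
    - apply RInt_le. lra. apply ex_RInt_scalR; auto.
      apply ex_RInt_plusR; auto. apply ex_RInt_scalR; auto.
      intros t Ht. unfold g, h, D, L, s. apply pointwise; auto; lia.
    - rewrite (RInt_plusR g (fun t => D * h t)); auto. 2: apply ex_RInt_scalR; auto.
      rewrite (RInt_scalR h) by auto.
      unfold g. rewrite RInt_sumR. 2:{ intros; apply share_ex_RInt; auto; lra. }
      apply Rplus_le_compat. unfold F; lra.
      apply Rmult_le_compat_l. lra.
      unfold h.
      rewrite (RInt_plusR (fun t => ind 0 eps t + ind (len N e - eps) (len N e) t) (ind (s - eps) (s + eps))).
      2: apply ex_RInt_plusR; apply ind_ex_RInt; lra.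
      2: apply ind_ex_RInt; lra.
      rewrite (RInt_plusR (ind 0 eps) (ind (len N e - eps) (len N e))).
      2,3: apply ind_ex_RInt; lra.
      assert (H1 := ind_RInt 0 eps 0 (len N e) ltac:(lra) ltac:(lra)).
      assert (H2 := ind_RInt (len N e - eps) (len N e) 0 (len N e) ltac:(lra) ltac:(lra)).
      assert (H3 := ind_RInt (s - eps) (s + eps) 0 (len N e) ltac:(lra) ltac:(lra)).
      lra. }
  assert (Hsum := sumR_le _ _ _ Hedge).
  rewrite sumR_plus, sumR_const, sumR_scal, length_seq in Hsum.
  unfold F in Hsum. rewrite sumR_swap in Hsum.
  match type of Hsum with (D * ?A <= ?B + _) =>
    assert (EA : payoff N n x j = A) by (rewrite (payoff_RInt N n x j HN Hj); reflexivity);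
    assert (EB : B <= D * payoff N n x i) end.
  { eapply Rle_trans. apply sumR_le with (g := fun _ => payoff N n x i).
    - intros P HP. pose proof (payoff_RInt N n (deviate x i P) i HN Hi) as E.
      pose proof (Hnash i P Hi (Hval P HP)) as HH. eapply Rle_trans; [|exact HH].
      rewrite E. apply Rle_refl.
    - rewrite sumR_const. unfold L. rewrite dirs_length. fold D. lra. }
  rewrite <- EA in Hsum.
  assert (D * payoff N n x j <= D * (payoff N n x i + 4 * eps * INR (ne N))) by lra.
  apply Rmult_le_reg_l in H; lra.
Qed.


Lemma avoid_list : forall L a b, a < b -> exists eps, a < eps < b /\ ~ In eps L.
Proof.
  induction L as [|c L IH]; intros a b Hab.
  - exists ((a + b) / 2). split. lra. simpl; auto.
  - destruct (Rle_dec c ((a + b) / 2)).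
    + destruct (IH ((a + b) / 2) b) as [e [He Hn]]. lra.
      exists e. split. lra. intros [H|H]; [lra|auto].
    + destruct (IH a ((a + b) / 2)) as [e [He Hn]]. lra.
      exists e. split. lra. intros [H|H]; [lra|auto].
Qed.

Lemma pos_min : forall l, (forall a, In a l -> 0 < a) -> exists m, 0 < m /\ forall a, In a l -> m <= a.
Proof.
  induction l as [|c l IH]; intros H.
  - exists 1. split. lra. intros a [].
  - destruct IH as [m [Hm Hl]]. intros; apply H; simpl; auto.
    assert (0 < c) by (apply H; simpl; auto).
    exists (Rmin m c). split. unfold Rmin; destruct Rle_dec; lra.
    intros a [<-|Ha]. apply Rmin_r. apply Rle_trans with m. apply Rmin_l. auto.
Qed.

Definition bad_list N n (x : profile) (w : point) : list R :=
  flat_map (fun k => match x k with PV _ => [] | PE g sg => [sg; len N g - sg; sg - s0 w; s0 w - sg] end)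
           (seq 0 n).

Lemma one_side : forall N n x i j, wf_network N -> is_nash N n x ->
  (i < n)%nat -> (j < n)%nat -> balanced N n x j -> payoff N n x j <= payoff N n x i.
Proof.
  intros N n x i j HN Hnash Hi Hj Hb.
  assert (HN' := HN). destruct HN' as [_ [HE _]].
  assert (Hxj := proj1 Hnash j Hj).
  set (Pos := map (len N) (seq 0 (ne N)) ++
              match x j with PE f s => [s; len N f - s] | _ => [] end).
  destruct (pos_min Pos) as [m [Hm Hml]].
  { intros a Ha. unfold Pos in Ha. apply in_app_or in Ha. destruct Ha as [Ha|Ha].
    - apply in_map_iff in Ha. destruct Ha as [e [<- He]]. apply in_seq in He.
      destruct (HE e ltac:(lia)) as [_ [_ [_ H]]]. auto.
    - destruct (x j) as [v|f s]. destruct Ha. simpl in Hxj.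
      destruct Ha as [<-|[<-|[]]]; lra. }
  assert (Hlenm : forall e, (e < ne N)%nat -> m <= len N e).
  { intros e He. apply Hml. unfold Pos. apply in_or_app. left. apply in_map. apply in_seq; lia. }
  destruct (Rle_dec (payoff N n x j) (payoff N n x i)) as [Hle|Hgt]; auto. exfalso.
  set (gap := payoff N n x j - payoff N n x i).
  set (C := 4 * INR (ne N) + 1).
  assert (HC : 1 <= C) by (unfold C; pose proof (pos_INR (ne N)); lra).
  destruct (avoid_list (bad_list N n x (x j)) 0 (Rmin m (gap / C))) as [eps [Heps Hbad]].
  { apply Rmin_glb_lt. auto. apply Rdiv_lt_0_compat; unfold gap; lra. }
  assert (Hem : eps < m) by (apply Rlt_le_trans with (Rmin m (gap / C)); [lra|apply Rmin_l]).
  assert (Heg : eps < gap / C) by (apply Rlt_le_trans with (Rmin m (gap / C)); [lra|apply Rmin_r]).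
  assert (Hmain : payoff N n x j <= payoff N n x i + 4 * eps * INR (ne N)).
  { apply main_bound; auto. lra.
    - intros P HP. destruct (x j) as [v|f s] eqn:Exj; simpl in HP.
      + apply in_map_iff in HP. destruct HP as [f [<- Hf]]. apply filter_In in Hf.
        destruct Hf as [Hf _]. apply in_seq in Hf. assert (Hl := Hlenm f ltac:(lia)).
        destruct (Nat.eqb (src N f) v); simpl; split; try lia; lra.
      + simpl in Hxj. destruct Hxj as [Hf Hs].
        assert (m <= s) by (apply Hml; unfold Pos; apply in_or_app; right; simpl; auto).
        assert (m <= len N f - s) by (apply Hml; unfold Pos; apply in_or_app; right; simpl; auto).
        destruct HP as [<-|[<-|[]]]; simpl; split; auto; lra.
    - intros P HP k Hk Hki Hxk. apply Hbad. unfold bad_list. apply in_flat_map.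
      exists k. split. apply in_seq; lia. rewrite Hxk.
      destruct (x j) as [v|f s] eqn:Exj; simpl in HP.
      + apply in_map_iff in HP. destruct HP as [f [<- Hf]].
        destruct (Nat.eqb (src N f) v); simpl.
        * left; auto.
        * right; left; ring.
      + destruct HP as [<-|[<-|[]]]; simpl.
        * right; right; right; left; ring.
        * right; right; left; ring. }
  assert (4 * eps * INR (ne N) < gap).
  { assert (eps * C < gap).
    { apply Rmult_lt_reg_r with (/ C). apply Rinv_0_lt_compat; lra.
      rewrite Rmult_assoc, Rinv_r by lra. unfold Rdiv in Heg. lra. }
    unfold C in H. pose proof (pos_INR (ne N)). nra. }
  unfold gap in H. lra.
Qed.

Lemma payoff_same_loc : forall N n x i j, x i = x j -> payoff N n x i = payoff N n x j.
Proof.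
  intros. unfold payoff, share, is_closest. rewrite H. reflexivity.
Qed.

Theorem mainTheorem8 (N : network) (HN : wf_network N) (n : nat) (x : profile) :
  (2 <= n)%nat -> is_nash N n x ->
  forall i j, (i < n)%nat -> (j < n)%nat ->
    balanced N n x i -> balanced N n x j ->
    payoff N n x i = payoff N n x j.
Proof.
  intros Hn Hnash i j Hi Hj Hbi Hbj.
  apply Rle_antisym; apply one_side; auto.
Qed.
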